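(* Let $\mu,\lambda$ be positive integers with $\lambda\ge e\mu$. Let $(X_t)_{t\ge0}$ be a random process with deterministic initial value $X_0\in\{1,\dots,\mu\}$ such that for every $t\ge1$, conditionally on $X_0,\dots,X_{t-1}$, $X_t$ has the law of $\min\{\mu,B\}$ with $B\sim\mathrm{Bin}(\lambda,\frac{X_{t-1}}{e\mu})$. Then for all $t\in\mathbb{N}$ and all $\Delta>0$, \[\Pr\big[\exists\,\tau\in\{1,\dots,t\}:\ X_\tau<X_0-\Delta\big]\le\frac{tX_0}{\Delta^2}.\]
   Context: $\mathrm{Bin}(m,p)$ denotes the binomial distribution with $m$ trials and success probability $p$. *)

(* Defs.v *)
From Stdlib Require Import Reals Lra Lia List.
Import ListNotations.
Open Scope R_scope.

Definition eul : R := exp 1.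

Definition binom_pmf (n : nat) (p : R) (k : nat) : R :=
  C n k * p ^ k * (1 - p) ^ (n - k).

(* Transition kernel: from state x, the next state is min{mu, B}
   with B ~ Bin(lambda, x/(e mu)).  Probability of moving to y. *)
Definition trans (mu lambda x y : nat) : R :=
  let p := INR x / (eul * INR mu) in
  if Nat.ltb y mu then binom_pmf lambda p y
  else if Nat.eqb y mu then
    fold_right Rplus 0 (map (binom_pmf lambda p) (seq mu (S lambda - mu)))
  else 0.

Fixpoint paths (m n : nat) : list (list nat) :=
  match n with
  | O => [[]]
  | S n' => flat_map (fun y => map (cons y) (paths m n')) (seq 0 (S m))
  end.

Fixpoint path_prob (mu lambda x : nat) (p : list nat) : R :=
  match p with
  | [] => 1
  | y :: p' => trans mu lambda x y * path_prob mu lambda y p'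
  end.

(* Pr[ exists tau in {1..t}, X_tau < c ] for the chain started at X_0 = x0 *)
Definition hit_below_prob (mu lambda x0 t : nat) (c : R) : R :=
  fold_right Rplus 0
    (map (fun p =>
            if existsb (fun y => if Rlt_dec (INR y) c then true else false) p
            then path_prob mu lambda x0 p else 0)
         (paths mu t)).

(* Main.v *)
Require Import Defs.
From Stdlib Require Import Reals Lra Lia List.
Import ListNotations.
Open Scope R_scope.

Definition sumL {A} (f : A -> R) (l : list A) := fold_right Rplus 0 (map f l).

Lemma sumL_cons {A} f (a : A) l : sumL f (a :: l) = f a + sumL f l.
Proof. reflexivity. Qed.
Lemma sumL_app {A} f (l1 l2 : list A) : sumL f (l1 ++ l2) = sumL f l1 + sumL f l2.
Proof. unfold sumL; induction l1; simpl; [lra|rewrite IHl1; lra]. Qed.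
Lemma sumL_ext {A} f g (l : list A) : (forall x, In x l -> f x = g x) -> sumL f l = sumL g l.
Proof. induction l; intros H; [reflexivity|]. rewrite !sumL_cons, H, IHl; simpl; auto; intros; apply H; simpl; auto. Qed.
Lemma sumL_le {A} f g (l : list A) : (forall x, In x l -> f x <= g x) -> sumL f l <= sumL g l.
Proof. induction l; intros H; [unfold sumL; simpl; lra|]. rewrite !sumL_cons.
  apply Rplus_le_compat; [apply H; simpl; auto| apply IHl; intros; apply H; simpl; auto]. Qed.
Lemma sumL_plus {A} f g (l : list A) : sumL (fun x => f x + g x) l = sumL f l + sumL g l.
Proof. induction l; [unfold sumL; simpl; lra|]. rewrite !sumL_cons, IHl; lra. Qed.
Lemma sumL_scal {A} c f (l : list A) : sumL (fun x => c * f x) l = c * sumL f l.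
Proof. induction l; [unfold sumL; simpl; lra|]. rewrite !sumL_cons, IHl; lra. Qed.
Lemma sumL_map {A B} (f : B -> R) (g : A -> B) l : sumL f (map g l) = sumL (fun x => f (g x)) l.
Proof. induction l; [reflexivity|]. simpl map. rewrite !sumL_cons, IHl; reflexivity. Qed.
Lemma sumL_flat_map {A B} (f : B -> R) (g : A -> list B) l :
  sumL f (flat_map g l) = sumL (fun x => sumL f (g x)) l.
Proof. induction l; [reflexivity|]. simpl flat_map. rewrite sumL_app, sumL_cons, IHl; reflexivity. Qed.

Definition Cz (n k : nat) : R := if Nat.leb k n then C n k else 0.

Lemma C_nonneg n k : 0 <= C n k.
Proof.
  unfold C, Rdiv. apply Rmult_le_pos; [apply pos_INR|].
  left; apply Rinv_0_lt_compat; apply Rmult_lt_0_compat; apply lt_0_INR; apply Factorial.lt_O_fact.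
Qed.
Lemma Cz_nonneg n k : 0 <= Cz n k.
Proof. unfold Cz; destruct (Nat.leb k n); [apply C_nonneg|lra]. Qed.

Lemma C_nn n : C n n = 1.
Proof. unfold C. rewrite Nat.sub_diag. simpl. field. apply INR_fact_neq_0. Qed.
Lemma C_n0 n : C n 0 = 1.
Proof. unfold C. rewrite Nat.sub_0_r. simpl. field. apply INR_fact_neq_0. Qed.

Lemma Cz_pascal n j : Cz (S n) (S j) = Cz n j + Cz n (S j).
Proof.
  unfold Cz. destruct (Nat.lt_total j n) as [H|[H|H]].
  - replace (Nat.leb (S j) (S n)) with true by (symmetry; apply Nat.leb_le; lia).
    replace (Nat.leb j n) with true by (symmetry; apply Nat.leb_le; lia).
    replace (Nat.leb (S j) n) with true by (symmetry; apply Nat.leb_le; lia).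
    symmetry; apply pascal; auto.
  - subst. rewrite Nat.leb_refl. replace (Nat.leb (S n) n) with false by (symmetry; apply Nat.leb_gt; lia).
    simpl Nat.leb. rewrite Nat.leb_refl, !C_nn. lra.
  - replace (Nat.leb (S j) (S n)) with false by (symmetry; apply Nat.leb_gt; lia).
    replace (Nat.leb j n) with false by (symmetry; apply Nat.leb_gt; lia).
    replace (Nat.leb (S j) n) with false by (symmetry; apply Nat.leb_gt; lia). lra.
Qed.

Definition E (p : R) (n : nat) (h : nat -> R) : R :=
  sumL (fun k => Cz n k * p ^ k * (1 - p) ^ (n - k) * h k) (seq 0 (S n)).

Lemma E_ext p n h g : (forall k, (k <= n)%nat -> h k = g k) -> E p n h = E p n g.
Proof. intros H; unfold E; apply sumL_ext; intros k Hk; apply in_seq in Hk. rewrite H by lia; auto. Qed.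
Lemma E_plus p n h g : E p n (fun k => h k + g k) = E p n h + E p n g.
Proof. unfold E; rewrite <- sumL_plus; apply sumL_ext; intros; ring. Qed.
Lemma E_scal p n c h : E p n (fun k => c * h k) = c * E p n h.
Proof. unfold E; rewrite <- sumL_scal; apply sumL_ext; intros; ring. Qed.
Lemma E_mono p n h g : 0 <= p <= 1 -> (forall k, (k <= n)%nat -> h k <= g k) -> E p n h <= E p n g.
Proof.
  intros Hp H; unfold E; apply sumL_le; intros k Hk; apply in_seq in Hk.
  apply Rmult_le_compat_l; [|apply H; lia].
  apply Rmult_le_pos; [apply Rmult_le_pos|]; [apply Cz_nonneg|apply pow_le; lra|apply pow_le; lra].
Qed.

Lemma E_rec p n h : E p (S n) h = p * E p n (fun k => h (S k)) + (1 - p) * E p n h.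
Proof.
  set (q := 1 - p).
  set (B := fun j => Cz n (S j) * p ^ (S j) * q ^ (n - j) * h (S j)).
  assert (H1 : E p (S n) h = q ^ (S n) * h 0%nat +
     sumL (fun j => Cz (S n) (S j) * p ^ (S j) * q ^ (n - j) * h (S j)) (seq 0 (S n))).
  { unfold E. change (seq 0 (S (S n))) with (0%nat :: seq 1 (S n)).
    rewrite <- seq_shift, sumL_cons, sumL_map. unfold Cz at 1. simpl Nat.leb. rewrite C_n0.
    simpl Nat.sub. simpl pow. fold q. ring. }
  assert (H2 : sumL (fun j => Cz (S n) (S j) * p ^ (S j) * q ^ (n - j) * h (S j)) (seq 0 (S n))
     = p * E p n (fun k => h (S k)) + sumL B (seq 0 (S n))).
  { unfold E. rewrite <- sumL_scal, <- sumL_plus. apply sumL_ext. intros j _.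
    unfold B. rewrite Cz_pascal. simpl pow. fold q. ring. }
  assert (H3 : sumL B (seq 0 (S n)) = sumL B (seq 0 n)).
  { rewrite seq_S, sumL_app, sumL_cons.
    assert (HB : B (0 + n)%nat = 0).
    { unfold B, Cz. replace (Nat.leb (S (0 + n)) n) with false by (symmetry; apply Nat.leb_gt; lia). ring. }
    rewrite HB. unfold sumL at 2. simpl. ring. }
  assert (H4 : q * E p n h = q ^ (S n) * h 0%nat + sumL B (seq 0 n)).
  { unfold E. change (seq 0 (S n)) with (0%nat :: seq 1 n).
    rewrite <- seq_shift, sumL_cons, sumL_map. unfold Cz at 1. simpl Nat.leb. rewrite C_n0.
    rewrite Rmult_plus_distr_l, <- sumL_scal. fold q. rewrite Nat.sub_0_r. simpl pow.
    f_equal; [ring|]. apply sumL_ext. intros j Hj. apply in_seq in Hj. unfold B.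
    replace (n - j)%nat with (S (n - S j)) by lia. simpl pow. ring. }
  rewrite H1, H2, H3, H4. fold q. ring.
Qed.

Lemma E_base p h : E p 0 h = h 0%nat.
Proof. unfold E, Cz, sumL. simpl. unfold C; simpl. field. Qed.

Lemma E_one p n : E p n (fun _ => 1) = 1.
Proof. induction n; [rewrite E_base; auto|]. rewrite E_rec, IHn. ring. Qed.

Lemma E_id p n : E p n INR = INR n * p.
Proof.
  induction n; [rewrite E_base; simpl; ring|].
  rewrite E_rec, IHn. rewrite (E_ext _ _ (fun k => INR (S k)) (fun k => INR k + 1)).
  2:{ intros; rewrite S_INR; auto. }
  rewrite E_plus, E_one, IHn, S_INR. ring.
Qed.

Lemma E_sq p n : E p n (fun k => INR k ^ 2) = INR n * p * (1 - p) + INR n ^ 2 * p ^ 2.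
Proof.
  induction n; [rewrite E_base; simpl; ring|].
  rewrite E_rec, IHn. rewrite (E_ext _ _ (fun k => INR (S k) ^ 2) (fun k => INR k ^ 2 + (2 * INR k + 1))).
  2:{ intros; rewrite S_INR; ring. }
  rewrite E_plus, E_plus, E_scal, E_one, E_id, IHn, S_INR. ring.
Qed.

Lemma E_quad p n a r s d :
  E p n (fun k => (a - r * INR k) ^ 2 * s + d) =
  (a ^ 2 - 2 * a * r * (INR n * p) + r ^ 2 * (INR n * p * (1 - p) + (INR n * p) ^ 2)) * s + d.
Proof.
  rewrite (E_ext _ _ _ (fun k => (a^2*s+d) * 1 + ((-2*a*r*s) * INR k + (r^2*s) * INR k ^ 2))).
  2:{ intros; ring. }
  rewrite E_plus, E_plus, !E_scal, E_one, E_id, E_sq. ring.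
Qed.

Lemma trans_sum (mu lambda x : nat) (Hh : nat -> R) :
  (mu <= lambda)%nat ->
  sumL (fun y => trans mu lambda x y * Hh y) (seq 0 (S mu)) =
  E (INR x / (eul * INR mu)) lambda (fun b => Hh (Nat.min mu b)).
Proof.
  intros Hml. set (p := INR x / (eul * INR mu)).
  rewrite seq_S, sumL_app, sumL_cons. unfold E.
  replace (S lambda) with (mu + (S lambda - mu))%nat by lia.
  rewrite seq_app, sumL_app. f_equal.
  - apply sumL_ext. intros y Hy. apply in_seq in Hy.
    unfold trans. cbv zeta. fold p.
    replace (Nat.ltb y mu) with true by (symmetry; apply Nat.ltb_lt; lia).
    unfold Cz. replace (Nat.leb y lambda) with true by (symmetry; apply Nat.leb_le; lia).
    rewrite Nat.min_r by lia. unfold binom_pmf. ring.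
  - unfold trans. cbv zeta. fold p.
    replace (Nat.ltb (0 + mu) mu) with false by (symmetry; apply Nat.ltb_ge; lia).
    replace (Nat.eqb (0 + mu) mu) with true by (symmetry; apply Nat.eqb_eq; lia).
    replace (mu + (S lambda - mu) - mu)%nat with (S lambda - mu)%nat by lia.
    change (fold_right Rplus 0 (map (binom_pmf lambda p) (seq mu (S lambda - mu))))
      with (sumL (binom_pmf lambda p) (seq mu (S lambda - mu))).
    unfold sumL at 2. simpl fold_right. rewrite Rplus_0_r, Rmult_comm, <- sumL_scal.
    simpl (0 + mu)%nat. apply sumL_ext. intros b Hb. apply in_seq in Hb.
    unfold Cz. replace (Nat.leb b lambda) with true by (symmetry; apply Nat.leb_le; lia).
    rewrite Nat.min_l by lia. unfold binom_pmf. ring.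
Qed.

Lemma phi_le (a b r : R) : 0 <= r <= 1 -> 0 <= b -> (Rmax 0 (a - b)) ^ 2 <= (a - r * b) ^ 2.
Proof.
  intros Hr Hb. unfold Rmax. destruct (Rle_dec 0 (a - b)).
  - assert (a - b <= a - r * b) by nra. apply pow_incr; lra.
  - replace (0 ^ 2) with 0 by ring. apply pow2_ge_0.
Qed.

Lemma div_nonneg a b : 0 <= a -> 0 < b -> 0 <= a / b.
Proof. intros; unfold Rdiv; apply Rmult_le_pos; [auto| left; apply Rinv_0_lt_compat; auto]. Qed.

Lemma key (X0 X L Mu e : R) : 0 <= X0 -> 0 <= X -> X <= Mu -> 1 <= Mu -> 1 <= e -> e * Mu <= L ->
  exists r, 0 <= r <= 1 /\
   X0 ^ 2 - 2 * X0 * r * (L * (X / (e * Mu))) +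
   r ^ 2 * (L * (X / (e * Mu)) * (1 - X / (e * Mu)) + (L * (X / (e * Mu))) ^ 2)
   <= (Rmax 0 (X0 - X)) ^ 2 + X0.
Proof.
  intros H0 HX HXM HM He HL.
  assert (Hem : 0 < e * Mu) by nra.
  set (p := X / (e * Mu)).
  assert (Hp0 : 0 <= p) by (unfold p; apply div_nonneg; lra).
  assert (Hp1 : p <= 1).
  { unfold p. apply (Rmult_le_reg_r (e * Mu)); auto. unfold Rdiv. rewrite Rmult_assoc, Rinv_l by lra. nra. }
  destruct (Req_dec X 0) as [HX0|HX0].
  - exists 0. split; [lra|]. assert (p = 0) as -> by (unfold p; rewrite HX0; unfold Rdiv; ring).
    rewrite HX0. replace (X0 - 0) with X0 by ring. unfold Rmax. destruct (Rle_dec 0 X0); [|lra]. ring_simplify. lra.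
  - set (m := L * p).
    assert (Hm : X <= m).
    { unfold m, p. unfold Rdiv. replace (L * (X * / (e * Mu))) with (X * (L / (e * Mu))) by (unfold Rdiv; ring).
      assert (1 <= L / (e * Mu)).
      { apply (Rmult_le_reg_r (e * Mu)); auto. unfold Rdiv. rewrite Rmult_assoc, Rinv_l by lra. lra. }
      nra. }
    set (a := Rmin X X0).
    assert (Ha0 : 0 <= a) by (unfold a, Rmin; destruct (Rle_dec X X0); lra).
    assert (Ham : a <= m) by (unfold a, Rmin; destruct (Rle_dec X X0); lra).
    assert (HaX0 : a <= X0) by (unfold a, Rmin; destruct (Rle_dec X X0); lra).
    assert (Hmp : 0 < m) by lra.
    exists (a / m). split.
    { split; [apply div_nonneg; lra|]. apply (Rmult_le_reg_r m); auto.
      unfold Rdiv. rewrite Rmult_assoc, Rinv_l by lra. lra. }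
    fold p. fold m.
    replace (X0 ^ 2 - 2 * X0 * (a / m) * m + (a / m) ^ 2 * (m * (1 - p) + m ^ 2))
      with ((X0 - a) ^ 2 + a * (a / m) * (1 - p)) by (field; lra).
    assert (Hphi : (X0 - a) ^ 2 = (Rmax 0 (X0 - X)) ^ 2).
    { unfold a, Rmin, Rmax. destruct (Rle_dec X X0); destruct (Rle_dec 0 (X0 - X)); try lra; try ring. }
    rewrite Hphi.
    assert (a / m <= 1).
    { apply (Rmult_le_reg_r m); auto. unfold Rdiv. rewrite Rmult_assoc, Rinv_l by lra. lra. }
    assert (0 <= a / m) by (apply div_nonneg; lra).
    set (t := a / m) in *.
    assert (0 <= a * t) by (apply Rmult_le_pos; lra).
    assert (a * t * (1 - p) <= a * t) by nra.
    assert (a * t <= a) by nra.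
    lra.
Qed.

Definition tot mu lambda x n := sumL (path_prob mu lambda x) (paths mu n).

Lemma tot_one mu lambda n : (mu <= lambda)%nat -> forall x, tot mu lambda x n = 1.
Proof.
  intros Hml. induction n; intros x.
  - unfold tot, sumL. simpl. ring.
  - unfold tot. change (paths mu (S n)) with (flat_map (fun y => map (cons y) (paths mu n)) (seq 0 (S mu))).
    rewrite sumL_flat_map.
    rewrite (sumL_ext _ (fun y => trans mu lambda x y * (fun _ => 1) y)).
    2:{ intros y _. rewrite sumL_map. simpl path_prob. rewrite sumL_scal.
        change (sumL (path_prob mu lambda y) (paths mu n)) with (tot mu lambda y n).
        rewrite IHn. reflexivity. }
    rewrite trans_sum by auto. apply E_one.
Qed.

Lemma hit_S mu lambda x n c : hit_below_prob mu lambda x (S n) c =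
  sumL (fun y => trans mu lambda x y *
     (if Rlt_dec (INR y) c then tot mu lambda y n else hit_below_prob mu lambda y n c)) (seq 0 (S mu)).
Proof.
  unfold hit_below_prob at 1.
  change (paths mu (S n)) with (flat_map (fun y => map (cons y) (paths mu n)) (seq 0 (S mu))).
  change (fold_right Rplus 0 (map ?f ?l)) with (sumL f l).
  rewrite sumL_flat_map. apply sumL_ext. intros y _. rewrite sumL_map.
  simpl existsb. simpl path_prob.
  destruct (Rlt_dec (INR y) c).
  - simpl orb. unfold tot. rewrite <- sumL_scal. reflexivity.
  - simpl orb. unfold hit_below_prob.
    change (fold_right Rplus 0 (map ?f ?l)) with (sumL f l).
    rewrite <- sumL_scal. apply sumL_ext. intros q _.
    destruct (existsb _ q); ring.
Qed.

Lemma eul_ge1 : 1 <= eul.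
Proof. unfold eul. pose proof (exp_ineq1 1). lra. Qed.

Lemma bound mu lambda x0 Delta :
  (1 <= mu)%nat -> eul * INR mu <= INR lambda -> (x0 <= mu)%nat -> 0 < Delta ->
  forall n x, (x <= mu)%nat ->
  hit_below_prob mu lambda x n (INR x0 - Delta) <=
    ((Rmax 0 (INR x0 - INR x)) ^ 2 + INR n * INR x0) / Delta ^ 2.
Proof.
  intros Hmu HL Hx0 HD.
  assert (He := eul_ge1).
  assert (HMu : 1 <= INR mu) by (apply (le_INR 1); auto).
  assert (Hml : (mu <= lambda)%nat) by (apply INR_le; nra).
  assert (HD2 : 0 < Delta ^ 2) by (apply pow_lt; auto).
  assert (HiD : 0 < / Delta ^ 2) by (apply Rinv_0_lt_compat; auto).
  assert (Hx0r : INR x0 <= INR mu) by (apply le_INR; auto).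
  assert (Hx0p : 0 <= INR x0) by apply pos_INR.
  induction n; intros x Hx.
  - replace (hit_below_prob mu lambda x 0 _) with 0 by (unfold hit_below_prob; simpl; ring).
    unfold Rdiv. apply Rmult_le_pos; [|lra].
    apply Rplus_le_le_0_compat; [apply pow2_ge_0|]. rewrite Rmult_0_l. lra.
  - rewrite hit_S.
    rewrite trans_sum by auto.
    assert (Hxr : INR x <= INR mu) by (apply le_INR; auto).
    assert (Hxp : 0 <= INR x) by apply pos_INR.
    set (p := INR x / (eul * INR mu)).
    assert (Hp : 0 <= p <= 1).
    { assert (Hem : 0 < eul * INR mu) by nra. split; [apply div_nonneg; lra|].
      unfold p. apply (Rmult_le_reg_r (eul * INR mu)); auto. unfold Rdiv.
      rewrite Rmult_assoc, Rinv_l by lra. nra. }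
    destruct (key (INR x0) (INR x) (INR lambda) (INR mu) eul) as [r [Hr HV]]; auto.
    fold p in HV.
    eapply Rle_trans.
    { apply E_mono with (g := fun b => (INR x0 - r * INR b) ^ 2 * / Delta ^ 2 + INR n * INR x0 / Delta ^ 2); auto.
      intros b Hb.
      assert (Hy : (Nat.min mu b <= mu)%nat) by lia.
      assert (Hphi : (Rmax 0 (INR x0 - INR (Nat.min mu b))) ^ 2 <= (INR x0 - r * INR b) ^ 2).
      { destruct (Nat.le_gt_cases b mu).
        - rewrite Nat.min_r by lia. apply phi_le; auto. apply pos_INR.
        - rewrite Nat.min_l by lia. unfold Rmax. destruct (Rle_dec 0 (INR x0 - INR mu)).
          + assert (INR x0 - INR mu = 0) as -> by lra. replace (0 ^ 2) with 0 by ring. apply pow2_ge_0.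
          + replace (0 ^ 2) with 0 by ring. apply pow2_ge_0. }
      assert (Hn : 0 <= INR n * INR x0) by (apply Rmult_le_pos; [apply pos_INR|auto]).
      replace ((INR x0 - r * INR b) ^ 2 * / Delta ^ 2 + INR n * INR x0 / Delta ^ 2)
        with (((INR x0 - r * INR b) ^ 2 + INR n * INR x0) * / Delta ^ 2) by (unfold Rdiv; ring).
      destruct (Rlt_dec (INR (Nat.min mu b)) (INR x0 - Delta)) as [Hlt|Hge].
      + rewrite tot_one by auto.
        assert (Hm : Rmax 0 (INR x0 - INR (Nat.min mu b)) = INR x0 - INR (Nat.min mu b)).
        { unfold Rmax. destruct (Rle_dec 0 _); lra. }
        rewrite Hm in Hphi.
        assert (Delta ^ 2 <= (INR x0 - INR (Nat.min mu b)) ^ 2) by (apply pow_incr; lra).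
        replace 1 with (Delta ^ 2 * / Delta ^ 2) by (field; lra).
        apply Rmult_le_compat_r; lra.
      + eapply Rle_trans; [apply IHn; auto|]. unfold Rdiv.
        apply Rmult_le_compat_r; lra. }
    rewrite E_quad. rewrite S_INR.
    unfold Rdiv. fold p.
    replace ((Rmax 0 (INR x0 - INR x) ^ 2 + (INR n + 1) * INR x0) * / Delta ^ 2)
      with ((Rmax 0 (INR x0 - INR x) ^ 2 + INR x0) * / Delta ^ 2 + INR n * INR x0 * / Delta ^ 2) by ring.
    apply Rplus_le_compat_r. apply Rmult_le_compat_r; lra.
Qed.

Theorem lemma6 (mu lambda x0 t : nat) (Delta : R)
  (Hmu : (1 <= mu)%nat) (Hlam : (1 <= lambda)%nat)
  (Hle : eul * INR mu <= INR lambda)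
  (Hx0 : (1 <= x0 <= mu)%nat) (HD : 0 < Delta) :
  hit_below_prob mu lambda x0 t (INR x0 - Delta) <= INR t * INR x0 / Delta ^ 2.
Proof.
  eapply Rle_trans; [apply (bound mu lambda x0 Delta); auto; lia|].
  rewrite Rminus_diag. unfold Rmax. destruct (Rle_dec 0 0); [|lra].
  right. unfold Rdiv. ring.
Qed.
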